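(* In the setting below, there is a constant $\nu>0$ depending only on $c_0,\delta,r$ and $\eta$ such that for every $s>0$, every minimal family $\mathcal V\subset\mathcal U(s)$ (which is a covering of $X$) has local capacity $\operatorname{cap}_{\mathrm{loc}}(\mathcal V)\ge\nu$.
   Context: Setting: $f:X\to Y$ is an $\eta$-quasi-symmetric homeomorphism of metric spaces ($|xa|\le t|xb|\Rightarrow|f(x)f(a)|\le\eta(t)|f(x)f(b)|$, $\eta$ a homeomorphism of $[0,\infty)$), $X$ has at least two points, $n\ge0$, $c_0,\delta>0$, $r\in(0,1)$, and $\mathcal U_j$, $j\in\mathbb N$, are open coverings of $X$ such that: (i) there is a set $A$, $|A|=n+1$, with $\mathcal U_j=\bigcup_{a\in A}\mathcal U_j^a$, each $\mathcal U_j^a$ consisting of pairwise disjoint sets; (ii) $\delta r^j\le\operatorname{mesh}(\mathcal U_j)\le r^j$ and $L(\mathcal U_j)\ge c_0\operatorname{mesh}(\mathcal U_j)$; (iii) $\mathcal U_i$ is inscribed in $\mathcal U_j$ (each member of $\mathcal U_i$ lies in a member of $\mathcal U_j$) for $i>j$; (iv) for each $a\in A$, $\bigcup_j\mathcal U_j^a$ is separated (two different members are disjoint or nested); and additionally $\operatorname{diam}U\ge L(\mathcal U_j)$ for every $U\in\mathcal U_j$ and every $j$. Put $\mathcal U=\bigcup_j\mathcal U_j$ and $\mathcal U(s)=\{U\in\mathcal U:\operatorname{diam}f(U)\le s\}$. A subfamily $\mathcal V\subset\mathcal U(s)$ is minimal if every $U\in\mathcal U(s)$ is contained in some $V\in\mathcal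 V$ and no two different members of $\mathcal V$ are contained one in the other. Notation: $\operatorname{mesh}(\mathcal U,z)=\sup\{\operatorname{diam}U:z\in U\in\mathcal U\}$, $\operatorname{mesh}(\mathcal U)=\sup_U\operatorname{diam}U$, $L(\mathcal U,z)=\min\{\sup_{U\in\mathcal U}\operatorname{dist}(z,X\setminus U),\operatorname{mesh}(\mathcal U,z)\}$, $L(\mathcal U)=\inf_zL(\mathcal U,z)$, $\operatorname{cap}_{\mathrm{loc}}(\mathcal U)=\inf_zL(\mathcal U,z)/\operatorname{mesh}(\mathcal U,z)$. *)

(* Defs.v *)
From HB Require Import structures.
From mathcomp Require Import all_boot all_order all_algebra.
From mathcomp Require Import all_classical all_reals all_analysis.
Set Implicit Arguments. Unset Strict Implicit. Unset Printing Implicit Defensive.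
Import Order.TTheory GRing.Theory Num.Theory.
Local Open Scope classical_set_scope.
Local Open Scope ring_scope.

Section Defs.
Variable R : realType.

Definition is_metric (X : Type) (d : X -> X -> R) : Prop :=
  (forall x y, 0 <= d x y) /\ (forall x y, d x y = 0 <-> x = y) /\
  (forall x y, d x y = d y x) /\ (forall x y z, d x z <= d x y + d y z).

Definition mopen (X : Type) (d : X -> X -> R) (U : set X) : Prop :=
  forall x, U x -> exists2 e : R, 0 < e & forall y, d x y < e -> U y.

Definition mcontinuous (X Y : Type) (dX : X -> X -> R) (dY : Y -> Y -> R)
  (f : X -> Y) : Prop :=
  forall x (e : R), 0 < e -> exists2 de : R, 0 < de &
    forall y, dX x y < de -> dY (f x) (f y) < e.

Definition mhomeomorphism (X Y : Type) (dX : X -> X -> R) (dY : Y -> Y -> R)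
  (f : X -> Y) : Prop :=
  exists g : Y -> X, cancel f g /\ cancel g f /\
    mcontinuous dX dY f /\ mcontinuous dY dX g.

Definition cont_nonneg (h : R -> R) : Prop :=
  forall x (e : R), 0 <= x -> 0 < e -> exists2 de : R, 0 < de &
    forall y, 0 <= y -> `|x - y| < de -> `|h x - h y| < e.

Definition homeo_nonneg (eta : R -> R) : Prop :=
  exists g : R -> R,
    (forall t, 0 <= t -> 0 <= eta t) /\ (forall t, 0 <= t -> 0 <= g t) /\
    (forall t, 0 <= t -> g (eta t) = t) /\ (forall t, 0 <= t -> eta (g t) = t) /\
    cont_nonneg eta /\ cont_nonneg g.

Definition quasi_symmetric (X Y : Type) (dX : X -> X -> R) (dY : Y -> Y -> R)
  (eta : R -> R) (f : X -> Y) : Prop :=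
  forall (x a b : X) (t : R), 0 <= t -> dX x a <= t * dX x b ->
    dY (f x) (f a) <= eta t * dY (f x) (f b).

Local Open Scope ereal_scope.

Definition diam (X : Type) (d : X -> X -> R) (U : set X) : \bar R :=
  ereal_sup [set (d x y)%:E | x in U & y in U].

Definition dist (X : Type) (d : X -> X -> R) (z : X) (S : set X) : \bar R :=
  ereal_inf [set (d z y)%:E | y in S].

Definition mesh (X : Type) (d : X -> X -> R) (F : set (set X)) : \bar R :=
  ereal_sup [set diam d U | U in F].

Definition mesh_at (X : Type) (d : X -> X -> R) (F : set (set X)) (z : X) : \bar R :=
  ereal_sup [set diam d U | U in [set U | F U /\ U z]].

Definition lebesgue_at (X : Type) (d : X -> X -> R) (F : set (set X)) (z : X) : \bar R :=
  Order.min (ereal_sup [set dist d z (~` U) | U in F]) (mesh_at d F z).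

Definition lebesgue (X : Type) (d : X -> X -> R) (F : set (set X)) : \bar R :=
  ereal_inf [set lebesgue_at d F z | z in [set: X]].

Definition cap_loc (X : Type) (d : X -> X -> R) (F : set (set X)) : \bar R :=
  ereal_inf [set lebesgue_at d F z / mesh_at d F z | z in [set: X]].

End Defs.

(* Main.v *)
Require Import Defs.
From HB Require Import structures.
From mathcomp Require Import all_boot all_order all_algebra.
From mathcomp Require Import all_classical all_reals all_analysis.
From mathcomp Require Import lra zify ring.
Import Order.TTheory GRing.Theory Num.Theory.
Import numFieldNormedType.Exports.
Local Open Scope classical_set_scope.
Local Open Scope ring_scope.

Set Implicit Arguments. Unset Strict Implicit.

Lemma cont_within (R : realType) (h : R -> R) (a b : R) :
  0 <= a -> cont_nonneg h -> {within `[a, b], continuous h}.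
Proof.
move=> a0 hc; apply/subspace_continuousP => x xab.
have x0 : 0 <= x by move: xab; rewrite /= in_itv /= => /andP[+ _]; apply: le_trans.
apply/cvgrPdist_lt => e e0.
have [de de0 H] := hc x e x0 e0.
rewrite near_withinE; apply/nbhs_normP; exists de => //= y xy yab.
have y0 : 0 <= y by move: yab; rewrite /= in_itv /= => /andP[+ _]; apply: le_trans.
exact: H.
Qed.

Lemma eta0 (R : realType) (eta : R -> R) : homeo_nonneg eta -> eta 0 = 0.
Proof.
move=> [g [e0 [g0 [ge [eg [ce cg]]]]]].
have inj x y : 0 <= x -> 0 <= y -> eta x = eta y -> x = y.
  by move=> x0 y0 exy; rewrite -(ge x x0) -(ge y y0) exy.
have c0 : 0 <= eta 0 := e0 0 (lexx 0).
apply/eqP; rewrite eq_le c0 andbT; apply/negP => /negP; rewrite -ltNge => cp.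
set c := eta 0 in cp c0 *.
set p := g 0.
have p0 : 0 <= p by apply: g0.
have ep : eta p = 0 by apply: eg.
have pn0 : p != 0 by apply/eqP => p00; move: ep; rewrite p00 -/c => c00; move: cp; rewrite c00 ltxx.
have pp : 0 < p by rewrite lt_def pn0 p0.
set q := g (c + 1).
have q0 : 0 <= q by apply: g0; rewrite addr_ge0.
have eq1 : eta q = c + 1 by apply: eg; rewrite addr_ge0.
case: (leP q p) => qp.
- have [w wqp ew] : exists2 w, w \in `[q, p] & eta w = c.
    apply: IVT => //; first exact: cont_within.
    rewrite eq1 ep ge_min le_max; apply/andP; split; apply/orP; [right|left] => //.
    by rewrite lerDl.
  have qw : q <= w by move: wqp; rewrite in_itv /= => /andP[].
  have := inj w 0 (le_trans q0 qw) (lexx 0) ew => w00.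
  have qq : q = 0 by apply/eqP; rewrite eq_le q0 andbT -w00.
  move: eq1; rewrite qq -/c => h.
  have : (1:R) = 0 by apply: (addrI c); rewrite addr0 -h.
  by move/eqP; rewrite oner_eq0.
- have hc2 : 0 < c / 2 by rewrite divr_gt0.
  have [w1 w1p e1] : exists2 w, w \in `[0, p] & eta w = c / 2.
    apply: IVT => //; first exact: cont_within.
    rewrite ep -/c ge_min le_max; apply/andP; split; apply/orP; [right|left]; first exact: ltW.
    by rewrite ler_pdivrMr // ler_peMr // ?ler1n // ltW.
  have [w2 w2p e2] : exists2 w, w \in `[p, q] & eta w = c / 2.
    apply: IVT; [exact: ltW | idtac | idtac]. exact: cont_within.
    rewrite ep eq1 ge_min le_max; apply/andP; split; apply/orP; [left|right]; first exact: ltW.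
    apply: (le_trans (y := c)); last by rewrite lerDl.
    by rewrite ler_pdivrMr // ler_peMr // ?ler1n // ltW.
  have w10 : 0 <= w1 by move: w1p; rewrite in_itv /= => /andP[].
  have w1p' : w1 <= p by move: w1p; rewrite in_itv /= => /andP[].
  have w2p' : p <= w2 by move: w2p; rewrite in_itv /= => /andP[].
  have w12 := inj w1 w2 w10 (le_trans p0 w2p') (etrans e1 (esym e2)).
  have wp : w1 = p by apply/eqP; rewrite eq_le w1p' w12.
  by move: e1; rewrite wp ep => /eqP; rewrite eq_sym (gt_eqF hc2).
Qed.

Lemma expr_small (R : realType) (r e : R) : 0 < r < 1 -> 0 < e -> exists m : nat, r ^+ m < e.
Proof.
move=> /andP[r0 r1] e0.
have : `|r| < 1 by rewrite ger0_norm // ltW.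
move/cvg_expr/cvgrPdist_lt/(_ e e0) => [N _ HN].
exists N; have := HN N (leqnn N); rewrite /= sub0r normrN ger0_norm //.
exact: exprn_ge0 (ltW r0).
Qed.

Section H.
Variables (R : realType) (X : Type) (d : X -> X -> R).
Local Open Scope ereal_scope.

Lemma diam_ge (U : set X) x y : U x -> U y -> (d x y)%:E <= diam d U.
Proof. by move=> Ux Uy; apply: ereal_sup_ubound; exists x => //; exists y. Qed.

Lemma diam_le (U : set X) (c : R) :
  (forall x y, U x -> U y -> (d x y <= c)%R) -> diam d U <= c%:E.
Proof. by move=> H; apply/ereal_supP => _ [x Ux [y Uy <-]]; rewrite lee_fin; apply: H. Qed.

Lemma diam_gt (U : set X) (c : R) : c%:E < diam d U ->
  exists x y, [/\ U x, U y & (c < d x y)%R].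
Proof. by move=> /ereal_sup_gt [_ [x Ux [y Uy <-]]]; rewrite lte_fin => h; exists x, y. Qed.

Lemma dist_le z (S : set X) y : S y -> dist d z S <= (d z y)%:E.
Proof. by move=> Sy; apply: ereal_inf_lbound; exists y. Qed.

Lemma dist_ball z (U : set X) (rho : R) : rho%:E < dist d z (~` U) ->
  forall y, (d z y <= rho)%R -> U y.
Proof.
move=> H y zy; case: (pselect (U y)) => // nUy.
have h : dist d z (~` U) <= (d z y)%:E by apply: ereal_inf_lbound; exists y.
have h2 : (d z y)%:E <= rho%:E by rewrite lee_fin.
by have := lt_le_trans H (le_trans h h2); rewrite ltxx.
Qed.

Lemma dist_anti z (S T : set X) : S `<=` T -> dist d z T <= dist d z S.
Proof. by move=> ST; apply: ereal_inf_le_tmp => _ [y Sy <-]; exists y => //; apply: ST. Qed.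

Lemma mesh_ge (F : set (set X)) U : F U -> diam d U <= mesh d F.
Proof. by move=> FU; apply: ereal_sup_ubound; exists U. Qed.

Lemma mesh_at_ge (F : set (set X)) U z : F U -> U z -> diam d U <= mesh_at d F z.
Proof. by move=> FU Uz; apply: ereal_sup_ubound; exists U. Qed.

Lemma mesh_at_le (F : set (set X)) z c :
  (forall U, F U -> U z -> diam d U <= c) -> mesh_at d F z <= c.
Proof. by move=> H; apply/ereal_supP => _ [U [FU Uz] <-]; apply: H. Qed.

Lemma lebesgue_le_at (F : set (set X)) z : lebesgue d F <= lebesgue_at d F z.
Proof. by apply: ereal_inf_lbound; exists z. Qed.

Lemma sup_dist_ge (F : set (set X)) V z : F V ->
  dist d z (~` V) <= ereal_sup [set dist d z (~` U) | U in F].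
Proof. by move=> FV; apply: ereal_sup_ubound; exists V. Qed.

End H.



Lemma small_t (R : realType) (c0 delta r : R) (eta : R -> R) (de : R) :
  0 < c0 -> 0 < delta -> 0 < r < 1 -> 0 < de -> 
  (forall y, 0 <= y -> `|0 - y| < de -> `|eta 0 - eta y| < 1/2) -> eta 0 = 0 ->
  (forall t, 0 <= t -> 0 <= eta t) ->
  exists m : nat, 0 <= 4 * r ^+ m / (c0 * delta) /\ eta (4 * r ^+ m / (c0 * delta)) <= 1/2.
Proof.
move=> c00 d0 rr de0 Hde e00 etage0.
have /andP[r0 r1] := rr.
have cd0 : 0 < c0 * delta by rewrite mulr_gt0.
have [m rm] := @expr_small R r _ rr (mulr_gt0 de0 (divr_gt0 cd0 (ltr0n R 4))).
exists m; set t0 := 4 * r ^+ m / (c0 * delta).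
have rm0 : 0 <= r ^+ m by apply: exprn_ge0; apply: ltW.
have t00 : 0 <= t0 by rewrite /t0 divr_ge0 ?mulr_ge0 // ltW.
split => //.
have t0de : t0 < de.
  rewrite /t0 ltr_pdivrMr //.
  move: rm; rewrite mulrA ltr_pdivlMr // => h; lra.
have := Hde t0 t00; rewrite sub0r normrN ger0_norm // e00 sub0r normrN ger0_norm ?etage0 // => h.
exact: ltW (h t0de).
Qed.

Unset Implicit Arguments.

Lemma natA i k m : (i < k - m)%N -> (i + m <= k.-1)%N. Proof. lia. Qed.
Lemma natB k m : (k <= m + (k - m))%N. Proof. lia. Qed.
Lemma natC i k m : (i < k - m)%N -> (k <= k.-1)%N -> False. Proof. lia. Qed.

Theorem lemma4p9 (R : realType) (c0 delta r : R) (eta : R -> R) :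
  0 < c0 -> 0 < delta -> 0 < r < 1 -> homeo_nonneg eta ->
  exists2 nu : R, 0 < nu &
  forall (X Y : Type) (dX : X -> X -> R) (dY : Y -> Y -> R) (f : X -> Y)
         (n : nat) (Ucol : nat -> 'I_n.+1 -> set (set X)),
    is_metric dX -> is_metric dY ->
    mhomeomorphism dX dY f -> quasi_symmetric dX dY eta f ->
    (exists x y : X, x <> y) ->
    let Ulev := fun j : nat => \bigcup_(a in [set: 'I_n.+1]) Ucol j a in
    (* each U_j is an open covering of X *)
    (forall j U, Ulev j U -> mopen dX U) ->
    (forall j, \bigcup_(U in Ulev j) U = [set: X]) ->
    (* (i) each colour class U_j^a consists of pairwise disjoint sets *)
    (forall j a U V, Ucol j a U -> Ucol j a V -> U <> V -> U `&` V = set0) ->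
    (* (ii) *)
    (forall j, ((delta * r ^+ j)%:E <= mesh dX (Ulev j))%E /\
               (mesh dX (Ulev j) <= (r ^+ j)%:E)%E) ->
    (forall j, (c0%:E * mesh dX (Ulev j) <= lebesgue dX (Ulev j))%E) ->
    (* (iii) U_i is inscribed in U_j for i > j *)
    (forall i j, (j < i)%N -> forall U, Ulev i U -> exists2 V, Ulev j V & U `<=` V) ->
    (* (iv) for each a, the union over j of U_j^a is separated *)
    (forall a U V, (exists j, Ucol j a U) -> (exists j, Ucol j a V) -> U <> V ->
       U `&` V = set0 \/ U `<=` V \/ V `<=` U) ->
    (* additional assumption *)
    (forall j U, Ulev j U -> (lebesgue dX (Ulev j) <= diam dX U)%E) ->
    let Uall := \bigcup_(j in [set: nat]) Ulev j in
    let Us := fun s : R => [set U | Uall U /\ (diam dY (f @` U) <= s%:E)%E] in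
    forall (s : R), 0 < s ->
    forall Vs : set (set X),
      Vs `<=` Us s ->
      (forall U, Us s U -> exists2 V, Vs V & U `<=` V) ->
      (forall V1 V2, Vs V1 -> Vs V2 -> V1 `<=` V2 -> V1 = V2) ->
      \bigcup_(V in Vs) V = [set: X] /\ (nu%:E <= cap_loc dX Vs)%E.
Proof.
move=> c00 d0 rr he.
have /andP[r0 r1] := rr.
have e00 := eta0 he.
have [g [etage0 [_ [_ [_ [ce _]]]]]] := he.
have h2 : (0:R) < 1/2 by rewrite divr_gt0.
have [de de0 Hde] := ce 0 (1/2) (lexx 0) h2.
have [m [t00 et0]] := small_t c00 d0 rr de0 Hde e00 etage0.
set t0 := 4 * r ^+ m / (c0 * delta) in t00 et0.
have crp j : 0 < c0 * delta * r ^+ j by rewrite !mulr_gt0 // exprn_gt0.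
pose nu := Num.min 1 (c0 * delta * r ^+ m / 2).
have nu1 : nu <= 1 by rewrite ge_min lexx.
have nu2 : nu <= c0 * delta * r ^+ m / 2 by rewrite ge_min lexx orbT.
have nu0 : 0 < nu by rewrite lt_min ltr01 /= divr_gt0.
exists nu => //.
move=> X Y dX dY f n Ucol mX mY hf qs _ Ulev Uopen Ucov disj meshb lebb insc sep addl
  Uall Us s s0 Vs VsU Vmax Vmin.
have [dX0 [dXeq [dXsym dXtri]]] := mX.
have [dY0 [dYeq [dYsym dYtri]]] := mY.
have dXzz z : dX z z = 0 by apply/dXeq.
have F1 j U : Ulev j U -> (diam dX U <= (r ^+ j)%:E)%E.
  by move=> hU; apply: le_trans (mesh_ge dX hU) (meshb j).2.
have Lb j : ((c0 * delta * r ^+ j)%:E <= lebesgue dX (Ulev j))%E.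
  apply: le_trans (lebb j).
  rewrite -mulrA EFinM; apply: lee_wpmul2l; first by rewrite lee_fin ltW.
  exact: (meshb j).1.
have F2 j U : Ulev j U -> ((c0 * delta * r ^+ j)%:E <= diam dX U)%E.
  by move=> hU; apply: le_trans (addl j U hU).
have F3 j z : exists2 U, Ulev j U &
    ((c0 * delta * r ^+ j / 2)%:E < dist dX z (~` U))%E.
  have h1 := le_trans (Lb j) (lebesgue_le_at dX (Ulev j) z).
  have hm : (lebesgue_at dX (Ulev j) z <=
      ereal_sup [set dist dX z (~` U) | U in Ulev j])%E.
    by rewrite /lebesgue_at ge_min lexx.
  have : ((c0 * delta * r ^+ j / 2)%:E <
      ereal_sup [set dist dX z (~` U) | U in Ulev j])%E.
    apply: lt_le_trans (le_trans h1 hm); rewrite lte_fin.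
    have := crp j; lra.
  by move/ereal_sup_gt => [_ [U hU <-] hlt]; exists U.
have F5 j U x y : Ulev j U -> U x -> U y -> dX x y <= r ^+ j.
  by move=> hU Ux Uy; have := le_trans (diam_ge dX Ux Uy) (F1 j U hU); rewrite lee_fin.
have [gf [_ [_ [fc _]]]] := hf.
have main z : (exists2 V, Vs V & V z) /\
    (nu%:E <= lebesgue_at dX Vs z / mesh_at dX Vs z)%E.
  have s20 : 0 < s / 2 by rewrite divr_gt0.
  have [de2 de20 Hc] := fc z (s / 2) s20.
  have [K rK] := expr_small rr de20.
  pose P k := exists U, [/\ Ulev k U,
    ((c0 * delta * r ^+ k / 2)%:E < dist dX z (~` U))%E &
    (diam dY (f @` U) <= s%:E)%E].
  have inball j U : ((c0 * delta * r ^+ j / 2)%:E < dist dX z (~` U))%E -> U z.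
    move=> h; apply: (dist_ball h); rewrite dXzz; apply: ltW; rewrite divr_gt0 //; exact: crp.
  have PK : P K.
    have [U0 hU hd] := F3 K z.
    exists U0; split => //.
    have Uz := inball _ _ hd.
    apply: diam_le => _ _ [x Ux <-] [y Uy <-].
    have hx : dY (f z) (f x) < s / 2.
      by apply: Hc; apply: le_lt_trans (F5 _ _ _ _ hU Uz Ux) rK.
    have hy : dY (f z) (f y) < s / 2.
      by apply: Hc; apply: le_lt_trans (F5 _ _ _ _ hU Uz Uy) rK.
    have := dYtri (f x) (f z) (f y); rewrite (dYsym (f x) (f z)).
    lra.
  have [k Pk kmin] := ex_minnP (ex_intro (fun k => `[< P k >]) K (asboolT PK)).
  move/asboolP: Pk => [Uk [hUk hdk hfk]].
  have Ukz := inball _ _ hdk.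
  have UsUk : Us s Uk by split => //; exists k.
  have [V hV UkV] := Vmax Uk UsUk.
  have Vz : V z := UkV z Ukz.
  split; first by exists V.
  have mb : (mesh_at dX Vs z <= (r ^+ (k - m))%:E)%E.
    apply: mesh_at_le => V' hV' V'z.
    have [[i _ hi] hfV'] := VsU V' hV'.
    case: (leqP (k - m) i) => ik.
      apply: le_trans (F1 i V' hi) _; rewrite lee_fin.
      exact: (@ler_wiXn2l _ r (ltW r0) (ltW r1) _ _ ik).
    exfalso.
    pose k' := k.-1.
    have ik' : (i + m <= k')%N by exact: (natA _ _ _ ik).
    have nPk' : ~ P k'.
      by move=> Pk'; exact: (natC _ _ _ ik (kmin k' (asboolT Pk'))).
    have [U' hU' hdU'] := F3 k' z.
    have U'z := inball _ _ hdU'.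
    have hfU' : (s%:E < diam dY (f @` U'))%E.
      by rewrite ltNge; apply/negP => hle; apply: nPk'; exists U'; split.
    have pos_i := crp i.
    have : ((c0 * delta * r ^+ i / 2)%:E < diam dX V')%E.
      by apply: lt_le_trans (F2 i V' hi); rewrite lte_fin; lra.
    move/diam_gt => [x [y [V'x V'y hxy]]].
    have [a [V'a ha]] : exists a, V' a /\ c0 * delta * r ^+ i / 4 < dX z a.
      have := dXtri x z y; rewrite (dXsym x z) => tri.
      case: (ltP (c0 * delta * r ^+ i / 4) (dX z x)) => hx; first by exists x.
      by exists y; split => //; lra.
    have fza : dY (f z) (f a) <= s.
      have := le_trans (diam_ge dY (imageP f V'z) (imageP f V'a)) hfV'.
      by rewrite lee_fin.
    have bnd b : U' b -> dY (f z) (f b) <= s / 2.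
      move=> U'b.
      have hb : dX z b <= t0 * dX z a.
        have hh1 := F5 _ _ _ _ hU' U'z U'b.
        have hh2 : r ^+ k' <= r ^+ i * r ^+ m.
          by rewrite -exprD; exact: (@ler_wiXn2l _ r (ltW r0) (ltW r1) _ _ ik').
        have hh3 : r ^+ i * r ^+ m <= t0 * dX z a.
          have -> : r ^+ i * r ^+ m = t0 * (c0 * delta * r ^+ i / 4).
            rewrite /t0; field.
            by rewrite !gt_eqF.
          by apply: ler_wpM2l => //; apply: ltW.
        exact: le_trans hh1 (le_trans hh2 hh3).
      have hq := qs z b a t0 t00 hb.
      apply: le_trans hq _.
      have ed := etage0 t0 t00.
      have dd := dY0 (f z) (f a).
      apply: le_trans (ler_pM ed dd et0 fza) _; lra.
    have : (diam dY (f @` U') <= s%:E)%E.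
      apply: diam_le => _ _ [x' Ux' <-] [y' Uy' <-].
      have := dYtri (f x') (f z) (f y'); rewrite (dYsym (f x') (f z)).
      have := bnd x' Ux'; have := bnd y' Uy'.
      lra.
    by move/(lt_le_trans hfU'); rewrite ltxx.
  have [[jV _ hjV] _] := VsU V hV.
  have dpos := le_trans (F2 _ _ hjV) (mesh_at_ge dX hV Vz).
  move: dpos mb; case E: (mesh_at dX Vs z) => [M'| |] //= dpos mb.
  have M'pos : 0 < M' by apply: lt_le_trans (crp jV) _; rewrite -lee_fin.
  rewrite inver (gt_eqF M'pos) lee_pdivlMr // /lebesgue_at E -EFinM le_min.
  apply/andP; split; last by rewrite lee_fin ler_piMl // ltW.
  apply: le_trans (sup_dist_ge dX z hV).
  apply: le_trans (dist_anti dX z (_ : ~` V `<=` ~` Uk)); last first.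
    by move=> y nVy Uky; apply: nVy (UkV y Uky).
  apply: ltW; apply: le_lt_trans hdk; rewrite lee_fin.
  have hM : M' <= r ^+ (k - m) by rewrite -lee_fin.
  have hr : r ^+ m * r ^+ (k - m) <= r ^+ k.
    by rewrite -exprD; exact: (@ler_wiXn2l _ r (ltW r0) (ltW r1) _ _ (natB k m)).
  apply: le_trans (ler_pM (ltW nu0) (ltW M'pos) nu2 hM) _.
  have -> : c0 * delta * r ^+ m / 2 * r ^+ (k - m) =
     (c0 * delta / 2) * (r ^+ m * r ^+ (k - m)) by ring.
  have -> : c0 * delta * r ^+ k / 2 = (c0 * delta / 2) * r ^+ k by ring.
  have cd2 : 0 <= c0 * delta / 2 by apply: ltW; rewrite divr_gt0 // mulr_gt0.
  exact: ler_wpM2l cd2 _ _ hr.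
split.
  rewrite predeqE => z; split => // _.
  by have [[V hV Vz] _] := main z; exists V.
by apply: le_ereal_inf_tmp => _ [z _ <-]; exact: (main z).2.
Qed.
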